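(* Let $m,n\in\mathbb N$ and let $A=(\alpha_{ij})$ be a real $m\times n$ matrix with $\operatorname{rank}(A)=n$. Let $\beta\in\mathbb R_m$, $\varepsilon\ge 0$ and $F\in S(A,\beta,\varepsilon)$. Let $y\in\mathbb R_n$ and $\delta\ge0$ with $\|Ay^T-\beta^T\|_\infty\le\delta$. Put $C:=F(1,\dots,1)$ and $D:=(A^T)^{\dagger}$, and fix $K>1$. Then for every $v=(v_1,\dots,v_n)\in\mathbb R_n^+$ with $K^{-1}\le v_i\le K$ for all $i=1,\dots,n$, $$|F(v)-Cv^y|\le |F(v)|\big((1+\varepsilon)K^{m\delta\|D\|}-1\big).$$
   Context: $\mathbb R^m$ denotes real column vectors of length $m$, $\mathbb R_m$ real row vectors of length $m$; $\mathbb R_m^+$ (resp. $\mathbb R_n^+$) denotes the row vectors with all entries strictly positive. For $c=(c_1,\dots,c_m)\in\mathbb R_m^+$ and $\alpha=(\alpha_1,\dots,\alpha_m)\in\mathbb R_m$, $c^\alpha:=\prod_{i=1}^m c_i^{\alpha_i}$ (similarly $v^y=\prod_j v_j^{y_j}$ for $v\in\mathbb R_n^+$, $y\in\mathbb R_n$). For a real $m\times n$ matrix $A$ with columns $\alpha_1^T,\dots,\alpha_n^T$ (so $\alpha_j\in\mathbb R_m$), $\beta\in\mathbb R_m$ and $\varepsilon\ge0$, $S(A,\beta,\varepsilon)$ is the set of all functions $F:\mathbb R_n^+\to\mathbb R$ such that $$|F(v_1c^{\alpha_1},\dots,v_nc^{\alpha_n})-F(v_1,\dots,v_n)c^\beta|\le\varepsilon|F(v_1,\dots,v_n)|c^\beta$$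 for all $v_1,\dots,v_n>0$ and all $c\in\mathbb R_m^+$. $B^\dagger$ denotes the Moore–Penrose pseudoinverse of a real matrix $B$. $\|\cdot\|_\infty$ is the maximum norm on $\mathbb R^n$, $\mathbb R^m$, and for a matrix $B=(b_{ij})$, $\|B\|=\max_i\sum_j|b_{ij}|$ is the induced operator norm. *)

(* Defs.v *)
From Stdlib Require Import Reals.
From mathcomp Require Import all_boot.

Set Implicit Arguments.
Unset Strict Implicit.
Unset Printing Implicit Defensive.

Local Open Scope R_scope.

Definition mat (m n : nat) := 'I_m -> 'I_n -> R.
Definition vec (n : nat) := 'I_n -> R.

Definition sumR (n : nat) (f : 'I_n -> R) : R := \big[Rplus/0]_(i < n) f i.
Definition prodR (n : nat) (f : 'I_n -> R) : R := \big[Rmult/1]_(i < n) f i.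
Definition maxR (n : nat) (f : 'I_n -> R) : R := \big[Rmax/0]_(i < n) f i.

Definition vpow (n : nat) (c a : vec n) : R := prodR (fun i => Rpower (c i) (a i)).

Definition posvec (n : nat) (v : vec n) : Prop := forall i, 0 < v i.

Definition transpose (m n : nat) (A : mat m n) : mat n m := fun j i => A i j.
Definition mulmat (m n p : nat) (A : mat m n) (B : mat n p) : mat m p :=
  fun i k => sumR (fun j => A i j * B j k).
Definition mat_eq (m n : nat) (A B : mat m n) : Prop := forall i j, A i j = B i j.

(* rank(A) = n for an m x n matrix: the n columns are linearly independent *)
Definition full_col_rank (m n : nat) (A : mat m n) : Prop :=
  forall x : vec n, (forall i, sumR (fun j => A i j * x j) = 0) -> forall j, x j = 0.

(* X is the Moore-Penrose pseudoinverse of B (the four Penrose equations;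
   the pseudoinverse exists and is unique) *)
Definition is_pinv (p q : nat) (B : mat p q) (X : mat q p) : Prop :=
  mat_eq (mulmat (mulmat B X) B) B /\
  mat_eq (mulmat (mulmat X B) X) X /\
  mat_eq (transpose (mulmat B X)) (mulmat B X) /\
  mat_eq (transpose (mulmat X B)) (mulmat X B).

(* max norm of a vector, induced operator norm (max row sum) of a matrix *)
Definition infnorm (m : nat) (x : vec m) : R := maxR (fun i => Rabs (x i)).
Definition opnorm (m n : nat) (B : mat m n) : R :=
  maxR (fun i => sumR (fun j => Rabs (B i j))).

(* the class S(A, beta, eps); column j of A is alpha_j *)
Definition S_class (m n : nat) (A : mat m n) (beta : vec m) (eps : R)
    (F : vec n -> R) : Prop :=
  forall (v : vec n) (c : vec m), posvec v -> posvec c ->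
    Rabs (F (fun j => v j * vpow c (fun i => A i j)) - F v * vpow c beta)
      <= eps * Rabs (F v) * vpow c beta.

(* Main.v *)
Require Import Defs.
From Stdlib Require Import Reals.
From mathcomp Require Import all_boot.
From HB Require Import structures.
From Stdlib Require Import Reals Lra Psatz FunctionalExtensionality.
From mathcomp Require Import all_boot.
Local Open Scope R_scope.

Lemma RplusA : associative Rplus. Proof. move=> *; ring. Qed.
HB.instance Definition _ := Monoid.isComLaw.Build R 0 Rplus RplusA Rplus_comm Rplus_0_l.

Lemma sumR_ext n {f g : 'I_n -> R} : (forall i, f i = g i) -> sumR f = sumR g.
Proof. move=> H; apply: eq_bigr => i _; exact: H. Qed.

Lemma sumR_scal n c (f : 'I_n -> R) : sumR (fun i => c * f i) = c * sumR f.
Proof. rewrite /sumR; apply: (big_rec2 (fun a b => a = c * b)); first by ring.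
move=> i a b _ ->; ring. Qed.

Lemma sumR_scal_r n c (f : 'I_n -> R) : sumR (fun i => f i * c) = sumR f * c.
Proof. rewrite /sumR; apply: (big_rec2 (fun a b => a = b * c)); first by ring.
move=> i a b _ ->; ring. Qed.

Lemma sumR_add n (f g : 'I_n -> R) : sumR (fun i => f i + g i) = sumR f + sumR g.
Proof. by rewrite /sumR big_split. Qed.

Lemma sumR_sub n (f g : 'I_n -> R) : sumR (fun i => f i - g i) = sumR f - sumR g.
Proof. rewrite /sumR; apply: (big_rec3 (fun a b c => a = b - c)); first by ring.
move=> i a b c _ ->; ring. Qed.

Lemma sumR_swap n p (F : 'I_n -> 'I_p -> R) :
  sumR (fun i => sumR (fun k => F i k)) = sumR (fun k => sumR (fun i => F i k)).
Proof. by rewrite /sumR exchange_big. Qed.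

Lemma sumR_delta n (j : 'I_n) (f : 'I_n -> R) :
  sumR (fun k => (if j == k then 1 else 0) * f k) = f j.
Proof. rewrite /sumR (bigD1 j) //= eqxx big1 ?Rplus_0_r ?Rmult_1_l //.
move=> i /negbTE Hi; rewrite eq_sym Hi; ring. Qed.

Lemma sumR_le n (f g : 'I_n -> R) : (forall i, f i <= g i) -> sumR f <= sumR g.
Proof. move=> H; rewrite /sumR; apply: (big_ind2 (fun a b => a <= b)) => //; [lra|].
move=> *; lra. Qed.

Lemma sumR_abs n (f : 'I_n -> R) : Rabs (sumR f) <= sumR (fun i => Rabs (f i)).
Proof. rewrite /sumR; apply: (big_ind2 (fun a b => Rabs a <= b)).
- rewrite Rabs_R0; lra.
- move=> a b c d H1 H2; apply: Rle_trans (Rabs_triang _ _) _; lra.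
- move=> i _; lra. Qed.

Lemma sumR_const n c : sumR (fun _ : 'I_n => c) = INR n * c.
Proof. rewrite /sumR; elim: n => [|n IH]; first by rewrite big_ord0 /=; ring.
rewrite big_ord_recr IH S_INR /=; ring. Qed.

Lemma prodR_exp n (f : 'I_n -> R) : prodR (fun i => exp (f i)) = exp (sumR f).
Proof. rewrite /prodR /sumR; apply: (big_rec2 (fun a b => a = exp b)); first by rewrite exp_0.
move=> i a b _ ->; by rewrite exp_plus. Qed.

Lemma maxR_ge n (f : 'I_n -> R) i : f i <= maxR f.
Proof.
have H : forall r : seq 'I_n, i \in r -> f i <= \big[Rmax/0]_(k <- r) f k.
  elim=> [|a r IH] //; rewrite inE big_cons => /orP [/eqP ->|Hr].
  - exact: Rmax_l.
  - apply: Rle_trans (IH Hr) (Rmax_r _ _).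
exact: (H _ (mem_index_enum i)). Qed.

Lemma maxR_ge0 n (f : 'I_n -> R) : 0 <= maxR f.
Proof. rewrite /maxR; apply: (big_rec (fun a => 0 <= a)); first lra.
move=> i a _ H; apply: Rle_trans H (Rmax_r _ _). Qed.

Lemma ln_le' {x y} : 0 < x -> x <= y -> ln x <= ln y.
Proof. move=> Hx [H|->]; [left; exact: ln_increasing | lra]. Qed.

Lemma exp_le' {x y} : x <= y -> exp x <= exp y.
Proof. move=> [H|->]; [left; exact: exp_increasing | lra]. Qed.

Lemma exp_bound {s t} : Rabs s <= t -> Rabs (1 - exp s) <= exp t - 1.
Proof.
move=> H; have Ht : 0 <= t by apply: Rle_trans (Rabs_pos _) H.
have [Hs|Hs] := Rle_or_lt 0 s.
- rewrite Rabs_left1; last by have := exp_le' Hs; rewrite exp_0; lra.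
  have : s <= t by rewrite Rabs_right in H; lra.
  move/exp_le'; lra.
- rewrite Rabs_right; last by have := exp_le' (Rlt_le _ _ Hs); rewrite exp_0; lra.
  have : - t <= s by rewrite Rabs_left in H; lra.
  move/exp_le'; rewrite exp_Ropp => Hle.
  have Hp := exp_pos t. have H1 := exp_le' Ht; rewrite exp_0 in H1.
  have Hinv : exp t * / exp t = 1 by field; lra.
  have Hi : 0 < / exp t by apply: Rinv_0_lt_compat.
  nra.
Qed.

Lemma vpow_eq n (c a : vec n) : vpow c a = exp (sumR (fun i => a i * ln (c i))).
Proof. exact: prodR_exp. Qed.

Lemma P_id m n (A : mat m n) (D : mat m n) :
  full_col_rank A -> is_pinv (transpose A) D ->
  forall j k, sumR (fun i => A i j * D i k) = if j == k then 1 else 0.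
Proof.
move=> Hr [H1 [_ [H3 _]]] j k.
set P := fun j k => sumR (fun i => A i j * D i k).
have HP1 : forall j i, sumR (fun l => P j l * A i l) = A i j := H1.
have HP3 : forall j k, P j k = P k j := fun j k => H3 k j.
suff Hx : forall i, sumR (fun l => A i l * (fun l => P l k - (if l == k then 1 else 0)) l) = 0.
  have := Hr _ Hx j; rewrite /P /=; lra.
move=> i /=.
rewrite (@sumR_ext _ _ (fun l => A i l * P l k - (if k == l then 1 else 0) * A i l)); last first.
  move=> l; rewrite eq_sym; ring.
rewrite sumR_sub sumR_delta.
rewrite (@sumR_ext _ _ (fun l => P k l * A i l)); last by move=> l; rewrite HP3; ring.
rewrite HP1; ring.
Qed.

Theorem theorem3p1 (m n : nat) (A : mat m n) (beta : vec m) (eps : R)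
    (F : vec n -> R) (y : vec n) (delta K : R) (D : mat m n) :
  full_col_rank A ->
  0 <= eps ->
  S_class A beta eps F ->
  0 <= delta ->
  infnorm (fun i => sumR (fun j => A i j * y j) - beta i) <= delta ->
  is_pinv (transpose A) D ->
  1 < K ->
  forall v : vec n, posvec v -> (forall i, / K <= v i <= K) ->
    Rabs (F v - F (fun _ => 1) * vpow v y)
      <= Rabs (F v) * ((1 + eps) * Rpower K (INR m * delta * opnorm D) - 1).
Proof.
move=> Hr Heps HF Hd Hinf Hpi HK v Hv HvK.
have HPid := @P_id _ _ _ _ Hr Hpi.
set lv := fun k => ln (v k).
set u := fun i => sumR (fun k => D i k * lv k).
have Key : forall j, sumR (fun i => A i j * u i) = lv j.
  move=> j.
  rewrite (@sumR_ext _ _ (fun i => sumR (fun k => A i j * D i k * lv k))); last first.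
    by move=> i; rewrite /u -sumR_scal; apply: sumR_ext => k; ring.
  rewrite sumR_swap.
  rewrite (@sumR_ext _ _ (fun k => (if j == k then 1 else 0) * lv k)); last first.
    by move=> k; rewrite sumR_scal_r HPid.
  exact: sumR_delta.
set c' := fun i => exp (- u i).
have Hc' : posvec c' by move=> i; apply: exp_pos.
have HS := HF v c' Hv Hc'.
have E1 : (fun j => v j * vpow c' (fun i => A i j)) = (fun _ => 1).
  apply: functional_extensionality => j.
  rewrite vpow_eq (@sumR_ext _ _ (fun i => - (A i j * u i))); last first.
    by move=> i; rewrite /c' ln_exp; ring.
  rewrite (@sumR_ext _ _ (fun i => -1 * (A i j * u i))); last by move=> i; ring.
  rewrite sumR_scal Key /lv -[exp _]/(exp (-1 * ln (v j))).
  have -> : -1 * ln (v j) = - ln (v j) by ring.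
  rewrite exp_Ropp exp_ln //; field; have := Hv j; lra.
rewrite E1 in HS.
set Sb := sumR (fun i => beta i * u i).
have E2 : vpow c' beta = / exp Sb.
  rewrite vpow_eq -exp_Ropp (@sumR_ext _ _ (fun i => -1 * (beta i * u i))); last first.
    by move=> i; rewrite /c' ln_exp; ring.
  by rewrite sumR_scal /Sb; congr exp; ring.
rewrite E2 in HS.
set C := F (fun _ => 1). set Fv := F v. set E := exp Sb.
have HE : 0 < E := exp_pos _.
have H2 : Rabs (Fv - C * E) <= eps * Rabs Fv.
  have -> : Fv - C * E = - (E * (C - Fv * / E)) by field; lra.
  rewrite Rabs_Ropp Rabs_mult Rabs_right; last lra.
  apply: Rle_trans (Rmult_le_compat_l _ _ _ (Rlt_le _ _ HE) HS) _.
  right; rewrite /E /Fv; field; have := exp_pos Sb; lra.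
have H3 : Rabs C * E <= (1 + eps) * Rabs Fv.
  have : Rabs (C * E) <= Rabs Fv + Rabs (Fv - C * E).
    have := Rabs_triang_inv (C * E) Fv; rewrite Rabs_minus_sym; lra.
  rewrite Rabs_mult (Rabs_right E); lra.
set Sy := sumR (fun j => y j * lv j).
have Evy : vpow v y = exp Sy by rewrite vpow_eq.
set r := fun i => sumR (fun j => A i j * y j) - beta i.
have ES : Sy - Sb = sumR (fun i => r i * u i).
  rewrite /Sy (@sumR_ext _ _ (fun j => sumR (fun i => y j * A i j * u i))); last first.
    by move=> j; rewrite -Key -sumR_scal; apply: sumR_ext => i; ring.
  rewrite sumR_swap /Sb -sumR_sub; apply: sumR_ext => i.
  by rewrite /r Rmult_minus_distr_r -sumR_scal_r; congr (_ - _); apply: sumR_ext => j; ring.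
have HlnK : 0 < ln K by rewrite -ln_1; apply: ln_increasing; lra.
have Hlv : forall k, Rabs (lv k) <= ln K.
  move=> k; apply: Rabs_le; have [h1 h2] := HvK k.
  have HK0 : 0 < K by lra.
  have := ln_le' (Rinv_0_lt_compat _ HK0) h1; rewrite ln_Rinv //.
  have := ln_le' (Hv k) h2; rewrite /lv; lra.
have Hu : forall i, Rabs (u i) <= opnorm D * ln K.
  move=> i; rewrite /u; apply: (Rle_trans _ _ _ (sumR_abs _ _)).
  apply: (Rle_trans _ (sumR (fun k => Rabs (D i k) * ln K))).
    apply: sumR_le => k; rewrite Rabs_mult.
    apply: Rmult_le_compat_l; [exact: Rabs_pos | exact: Hlv].
  rewrite sumR_scal_r; apply: Rmult_le_compat_r; first lra.
  exact: (maxR_ge _ (fun i => sumR (fun j => Rabs (D i j)))).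
have Hopn : 0 <= opnorm D by apply: maxR_ge0.
have Hs : Rabs (Sy - Sb) <= INR m * delta * opnorm D * ln K.
  rewrite ES; apply: (Rle_trans _ _ _ (sumR_abs _ _)).
  apply: (Rle_trans _ (sumR (fun _ : 'I_m => delta * (opnorm D * ln K)))).
    apply: sumR_le => i; rewrite Rabs_mult.
    apply: Rmult_le_compat; try exact: Rabs_pos; last exact: Hu.
    apply: Rle_trans Hinf; exact: (maxR_ge _ (fun i => Rabs (r i))).
  rewrite sumR_const; right; ring.
have Hb := exp_bound Hs.
have -> : Rpower K (INR m * delta * opnorm D) = exp (INR m * delta * opnorm D * ln K) by [].
set X := exp (INR m * delta * opnorm D * ln K).
have EY : exp Sy = E * exp (Sy - Sb) by rewrite /E -exp_plus; congr exp; ring.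
rewrite Evy EY.
have -> : Fv - C * (E * exp (Sy - Sb)) = (Fv - C * E) + C * E * (1 - exp (Sy - Sb)) by ring.
apply: Rle_trans (Rabs_triang _ _) _.
rewrite Rabs_mult Rabs_mult (Rabs_right E); last lra.
have H4 : Rabs C * E * Rabs (1 - exp (Sy - Sb)) <= (1 + eps) * Rabs Fv * (X - 1).
  apply: Rmult_le_compat => //.
  - apply: Rmult_le_pos; [exact: Rabs_pos | lra].
  - exact: Rabs_pos.
have -> : Rabs Fv * ((1 + eps) * X - 1) = eps * Rabs Fv + (1 + eps) * Rabs Fv * (X - 1) by ring.
lra.
Qed.
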